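(* Let $q,k\geq 0$ and let $\vec{x}=(x_0,\ldots,x_k)$ be a vector of nonnegative integers. Paul has a winning strategy for the $q$-round pathological liar game with $k$ lies and initial state $\vec{x}$ if and only if there exists an $\vec{x}$-covering of $Q_q$. Similarly, Paul has a winning strategy for the $q$-round original liar game with $k$ lies and initial state $\vec{x}$ if and only if there exists an $\vec{x}$-packing of $Q_q$.
   Context: Liar games: a state is $\vec{x}=(x_0,\ldots,x_k)$ of nonnegative integers ($x_i$ = number of elements carrying $i$ lies). In each of $q$ rounds Paul chooses a legal question $\vec{a}=(a_0,\ldots,a_k)$ with integers $0\leq a_i\leq x_i$, and Carole answers Y or N; the new state is $Y(\vec{x},\vec{a})=(a_0,\,a_1+x_0-a_0,\,\ldots,\,a_k+x_{k-1}-a_{k-1})$ or $N(\vec{x},\vec{a})=(x_0-a_0,\,x_1-a_1+a_0,\,\ldots,\,x_k-a_k+a_{k-1})$ respectively. In the pathological game Paul wins iff after $q$ rounds $\sum_i x_i\geq 1$; in the original game Paul wins iff after $q$ rounds $\sum_i x_i\leq 1$. Hypercube: $Q_q=\{Y,N\}^q$, with complementation $\overline{Y}=N$, $\overline{N}=Y$. For $i\geq 0$ let $\binom{[q]}{\leq i}$ be the family of subsets of $[q]=\{1,\ldots,q\}$ of size at most $i$. An $i$-quasiball in $Q_q$ is the image $f(\binom{[q]}{\leq i})$ of an injective map $f:\binom{[q]}{\leq i}\to Q_q$ with the property: whenever $A=\{p_1,\ldots,p_{|A|}\}$ and $B=\{p_1,\ldots,p_{|A|},p_{|A|+1},\ldots,p_{|B|}\}$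 lie in $\binom{[q]}{\leq i}$ with $p_1<\cdots<p_{|A|}<p_{|A|+1}<\cdots<p_{|B|}$ and $|B|>|A|$, and $f(A)=\omega_1\cdots\omega_q$, then $f(B)=\omega_1\cdots\omega_{p_{|A|+1}-1}\,\overline{\omega}_{p_{|A|+1}}\,\omega'_{p_{|A|+1}+1}\cdots\omega'_q$ for some arbitrary $\omega'_{p_{|A|+1}+1}\cdots\omega'_q\in\{Y,N\}^{q-p_{|A|+1}}$ (i.e. $f(B)$ agrees with $f(A)$ before position $p_{|A|+1}$ and differs from it at that position). An $\vec{x}$-covering of $Q_q$ is a collection consisting of $x_i$ $(k-i)$-quasiballs for each $0\leq i\leq k$ whose union is $Q_q$; an $\vec{x}$-packing of $Q_q$ is such a collection whose members are pairwise disjoint (the union need not be $Q_q$). *)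

(* Defs.v *)
From mathcomp Require Import all_boot all_order.
Set Implicit Arguments. Unset Strict Implicit. Unset Printing Implicit Defensive.

(* A state for k lies is x : {ffun 'I_k.+1 -> nat}, x i = number of elements
   carrying i lies. *)
Definition state (k : nat) := {ffun 'I_k.+1 -> nat}.

Definition legal (k : nat) (x a : state k) : Prop := forall i, a i <= x i.

Definition yes_state (k : nat) (x a : state k) : state k :=
  [ffun i : 'I_k.+1 => a i +
     (if nat_of_ord i == 0 then 0 else x (inord i.-1) - a (inord i.-1))].

Definition no_state (k : nat) (x a : state k) : state k :=
  [ffun i : 'I_k.+1 => (x i - a i) +
     (if nat_of_ord i == 0 then 0 else a (inord i.-1))].

Definition weight (k : nat) (x : state k) : nat := \sum_(i < k.+1) x i.

Fixpoint path_win (k q : nat) (x : state k) : Prop :=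
  match q with
  | 0 => 1 <= weight x
  | q'.+1 => exists a : state k, legal x a /\
               path_win q' (yes_state x a) /\ path_win q' (no_state x a)
  end.

Fixpoint orig_win (k q : nat) (x : state k) : Prop :=
  match q with
  | 0 => weight x <= 1
  | q'.+1 => exists a : state k, legal x a /\
               orig_win q' (yes_state x a) /\ orig_win q' (no_state x a)
  end.

(* Q_q = {Y,N}^q, encoded as q-tuples of booleans (true = Y, false = N);
   position p in {1..q} is the index p-1 : 'I_q. Complementation is negb. *)
Definition cube (q : nat) := (q.-tuple bool)%type.

Definition small_sets (q i : nat) : {set {set 'I_q}} := [set A : {set 'I_q} | #|A| <= i].

(* A and B with A = {p_1<...<p_|A|}, B = {p_1<...<p_|B|}, |B| > |A|:
   A is a proper subset of B and all elements of A are below those of B\A. *)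
Definition init_seg (q : nat) (A B : {set 'I_q}) : Prop :=
  A \proper B /\ (forall a b, a \in A -> b \in B :\: A -> a < b).

(* The quasiball condition on f : subsets -> Q_q, on the domain of sets of
   size <= i: for such A, B and p = p_{|A|+1} (= the least element of B\A),
   f(B) agrees with f(A) strictly before p and differs at p. *)
Definition quasiball_map (q i : nat) (f : {set 'I_q} -> cube q) : Prop :=
  {in small_sets q i &, injective f} /\
  forall A B : {set 'I_q}, A \in small_sets q i -> B \in small_sets q i ->
    init_seg A B ->
    forall p : 'I_q, p \in B :\: A -> (forall b, b \in B :\: A -> p <= b) ->
      (forall j : 'I_q, j < p -> tnth (f B) j = tnth (f A) j) /\
      tnth (f B) p = ~~ tnth (f A) p.

Definition is_quasiball (q i : nat) (S : {set cube q}) : Prop :=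
  exists f : {set 'I_q} -> cube q, quasiball_map i f /\ S = f @: small_sets q i.

Definition ball_family (q k : nat) (x : state k)
  (B : forall i : 'I_k.+1, 'I_(x i) -> {set cube q}) : Prop :=
  forall (i : 'I_k.+1) (u : 'I_(x i)), is_quasiball (k - i) (B i u).

Definition is_covering (q k : nat) (x : state k)
  (B : forall i : 'I_k.+1, 'I_(x i) -> {set cube q}) : Prop :=
  ball_family B /\
  forall w : cube q, exists (i : 'I_k.+1) (u : 'I_(x i)), w \in B i u.

Definition is_packing (q k : nat) (x : state k)
  (B : forall i : 'I_k.+1, 'I_(x i) -> {set cube q}) : Prop :=
  ball_family B /\
  forall (i j : 'I_k.+1) (u : 'I_(x i)) (v : 'I_(x j)),
    (i != j) || (nat_of_ord u != nat_of_ord v) -> [disjoint B i u & B j v].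

(* Main.v *)
Require Import Defs.
From mathcomp Require Import all_boot all_order.
From mathcomp Require Import zify.
Set Implicit Arguments. Unset Strict Implicit. Unset Printing Implicit Defensive.

Section QB.
Variable q : nat.

Definition shiftS (c : bool) (A : {set 'I_q}) : {set 'I_q.+1} :=
  [set j | if unlift ord0 j is Some j' then j' \in A else c].
Definition unshiftS (B : {set 'I_q.+1}) : {set 'I_q} := [set j | lift ord0 j \in B].

Lemma shiftS0 c A : (ord0 \in shiftS c A) = c.
Proof. by rewrite inE unlift_none. Qed.
Lemma shiftSl c A j : (lift ord0 j \in shiftS c A) = (j \in A).
Proof. by rewrite inE liftK. Qed.
Lemma unshiftK c A : unshiftS (shiftS c A) = A.
Proof. by apply/setP=> j; rewrite inE shiftSl. Qed.
Lemma shiftSK (B : {set 'I_q.+1}) : shiftS (ord0 \in B) (unshiftS B) = B.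
Proof.
apply/setP=> j; case: (unliftP ord0 j) => [j' ->|->]; first by rewrite shiftSl inE.
by rewrite shiftS0.
Qed.
Lemma card_shiftS c A : #|shiftS c A| = c + #|A|.
Proof.
rewrite (cardsD1 ord0) shiftS0; congr (_ + _).
have -> : shiftS c A :\ ord0 = [set lift ord0 x | x in A].
  apply/setP=> j; rewrite in_setD1; case: (unliftP ord0 j) => [j' ->|->].
    by rewrite shiftSl (mem_imset _ _ (@lift_inj _ ord0)) eq_sym neq_lift.
  rewrite eqxx /=; apply/esym/imsetP => -[y _ /eqP]; by rewrite (negbTE (neq_lift _ _)).
by rewrite card_imset //; apply: lift_inj.
Qed.
Lemma card_unshiftS (B : {set 'I_q.+1}) : #|B| = (ord0 \in B) + #|unshiftS B|.
Proof. by rewrite -{1}(shiftSK B) card_shiftS. Qed.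

Lemma tnth_cons (b : bool) (t : cube q) j : tnth [tuple of b :: t] (lift ord0 j) = tnth t j.
Proof. by rewrite !(tnth_nth false) lift0. Qed.
Lemma tnth_cons0 (b : bool) (t : cube q) : tnth [tuple of b :: t] ord0 = b.
Proof. by []. Qed.

Lemma small_shift (c : bool) A r : c <= r -> A \in small_sets q (r - c) -> shiftS c A \in small_sets q.+1 r.
Proof. rewrite !inE card_shiftS; case: c => /=; lia. Qed.
Lemma small_unshift (B : {set 'I_q.+1}) r : B \in small_sets q.+1 r -> unshiftS B \in small_sets q (r - (ord0 \in B)).
Proof. rewrite !inE (card_unshiftS B); case: (ord0 \in B) => /=; lia. Qed.

Lemma init_shift c A B : init_seg A B -> init_seg (shiftS c A) (shiftS c B).
Proof.
case=> /properP [sAB [y yB yA]] H; split.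
  apply/properP; split; last by exists (lift ord0 y); rewrite shiftSl.
  apply/subsetP=> j; case: (unliftP ord0 j) => [j' ->|->]; rewrite ?shiftS0 //.
  by rewrite !shiftSl; apply: (subsetP sAB).
move=> a b; case: (unliftP ord0 b) => [b' ->|->]; last by rewrite in_setD !shiftS0 andNb.
rewrite in_setD !shiftSl lift0; case: (unliftP ord0 a) => [a' ->|->] //.
rewrite shiftSl lift0 => aA bB; have := H a' b'; rewrite in_setD; move/(_ aA bB); lia.
Qed.

Lemma init_unshift A B : init_seg A B -> (ord0 \in A) = (ord0 \in B) ->
  init_seg (unshiftS A) (unshiftS B).
Proof.
case=> /properP [sAB [y yB yA]] H e; split.
  apply/properP; split.
    by apply/subsetP=> j; rewrite !inE; apply: (subsetP sAB).
  case: (unliftP ord0 y) yB yA => [y' ->|->]; last by rewrite e => ->.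
  by move=> *; exists y'; rewrite inE.
move=> a b; rewrite !inE => aA /andP[bA bB].
have := H (lift ord0 a) (lift ord0 b); rewrite !inE bA bB !lift0; move/(_ aA isT); lia.
Qed.

Lemma exists_min n (A B : {set 'I_n}) : A \proper B ->
  exists2 p : 'I_n, p \in B :\: A & forall b : 'I_n, b \in B :\: A -> p <= b.
Proof.
case/properP=> _ [y yB yA].
have yD : y \in B :\: A by rewrite inE yA yB.
case: (arg_minnP (fun j : 'I_n => nat_of_ord j) yD) => p pD Hp.
by exists p.
Qed.

End QB.

Lemma tnth_beh q (t : cube q.+1) j : tnth (behead_tuple t) j = tnth t (lift ord0 j).
Proof. by rewrite !(tnth_nth false) lift0 /= nth_behead. Qed.

Lemma cube_eq q (t t' : cube q.+1) : thead t = thead t' -> behead_tuple t = behead_tuple t' -> t = t'.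
Proof.
move=> h b; apply: eq_from_tnth => j; case: (unliftP ord0 j) => [j' ->|->] //.
by rewrite -!tnth_beh b.
Qed.

Lemma qb_head q r (f : {set 'I_q.+1} -> cube q.+1) B : quasiball_map r f ->
  B \in small_sets q.+1 r -> tnth (f B) ord0 = tnth (f set0) ord0 (+) (ord0 \in B).
Proof.
case=> _ H sB.
have s0 : set0 \in small_sets q.+1 r by rewrite inE cards0.
case: (set_0Vmem B) => [->|[y yB]]; first by rewrite inE addbF.
have ini : init_seg set0 B.
  split; last by move=> a b; rewrite inE.
  by apply/properP; split; [apply: sub0set | exists y; rewrite ?inE].
have [p pD pm] := exists_min (proj1 ini).
case: (H set0 B s0 sB ini p pD pm) => Hlt Hp.
have pB : p \in B by move: pD; rewrite in_setD => /andP[].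
case: (unliftP ord0 p) => [p' eqp | eqp].
  have nB : ord0 \notin B.
    apply/negP=> oB; have := pm ord0; rewrite in_setD in_set0 oB eqp lift0 => /(_ isT).
    by [].
  by rewrite (negbTE nB) addbF; apply: Hlt; rewrite eqp lift0.
by move: pB Hp; rewrite eqp => -> ->; rewrite addbT.
Qed.

Lemma qb_sub q r (f : {set 'I_q.+1} -> cube q.+1) (c : bool) : quasiball_map r f -> c <= r ->
  @quasiball_map q (r - c) (fun A => behead_tuple (f (shiftS c A))).
Proof.
move=> qf cr; have [finj fP] := qf.
have hd A : A \in small_sets q (r - c) -> thead (f (shiftS c A)) = tnth (f set0) ord0 (+) c.
  by move=> sA; rewrite /thead (qb_head qf (small_shift cr sA)) shiftS0.
split.
  move=> A A' sA sA' /= e.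
  have e2 : f (shiftS c A) = f (shiftS c A').
    by apply: cube_eq; rewrite ?hd.
  have := finj _ _ (small_shift cr sA) (small_shift cr sA') e2.
  by move/(congr1 (@unshiftS q)); rewrite !unshiftK.
move=> A B sA sB ini p pD pm.
have ini' := init_shift c ini.
have pD' : lift ord0 p \in shiftS c B :\: shiftS c A by rewrite in_setD !shiftSl -in_setD.
have pm' : forall b, b \in shiftS c B :\: shiftS c A -> lift ord0 p <= b.
  move=> b; case: (unliftP ord0 b) => [b' ->|->]; last by rewrite in_setD !shiftS0 andNb.
  by rewrite in_setD !shiftSl -in_setD !lift0 => /pm.
have [Hlt Hp] := fP _ _ (small_shift cr sA) (small_shift cr sB) ini' _ pD' pm'.
split; last by rewrite !tnth_beh.
by move=> j jp; rewrite !tnth_beh; apply: Hlt; rewrite !lift0.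
Qed.

Definition gmap q (b0 : bool) (g1 g2 : {set 'I_q} -> cube q) (B : {set 'I_q.+1}) : cube q.+1 :=
  [tuple of (b0 (+) (ord0 \in B)) :: (if ord0 \in B then g2 else g1) (unshiftS B)].

Lemma small_le q r (B : {set 'I_q.+1}) : B \in small_sets q.+1 r -> (ord0 \in B) <= r.
Proof. rewrite inE (card_unshiftS B); case: (ord0 \in B) => /=; lia. Qed.

Lemma qb_glue_map q r b0 (g1 g2 : {set 'I_q} -> cube q) : quasiball_map r g1 ->
  (0 < r -> quasiball_map r.-1 g2) -> quasiball_map r (gmap b0 g1 g2).
Proof.
move=> q1 q2.
have qG (c : bool) : c <= r -> quasiball_map (r - c) (if c then g2 else g1).
  by case: c => /= cr; [rewrite subn1; apply: q2 | rewrite subn0].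
split.
  move=> B B' sB sB' e.
  have e0 : (ord0 \in B) = (ord0 \in B').
    move: (congr1 (fun t : cube q.+1 => tnth t ord0) e); rewrite /gmap !tnth_cons0.
    by move/(congr1 (addb b0)); rewrite !addKb.
  have e1 := congr1 (fun t : cube q.+1 => behead (val t)) e; rewrite /= -e0 in e1.
  have e2 := val_inj e1.
  have [ginj _] := qG _ (small_le sB).
  have su := small_unshift sB; have su' := small_unshift sB'; rewrite -e0 in su'.
  by rewrite -(shiftSK B) -(shiftSK B') -e0 (ginj _ _ su su' e2).
move=> A B sA sB ini p pD pm.
have [/properP [sAB _] _] := ini.
case: (unliftP ord0 p) => [p' ep | ep].
  have e0 : (ord0 \in A) = (ord0 \in B).
    case oA: (ord0 \in A); first by rewrite (subsetP sAB _ oA).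
    case oB: (ord0 \in B) => //.
    have := pm ord0; rewrite in_setD oA oB ep lift0 => /(_ isT); by [].
  have ini' := init_unshift ini e0.
  have pD' : p' \in unshiftS B :\: unshiftS A by rewrite in_setD !inE -in_setD -ep.
  have pm' : forall b, b \in unshiftS B :\: unshiftS A -> p' <= b.
    move=> b; rewrite in_setD !inE -in_setD => /pm; rewrite ep !lift0; by [].
  have [_ gP] := qG _ (small_le sB).
  have su := small_unshift sA; have su' := small_unshift sB; rewrite e0 in su.
  have [Hlt Hp] := gP _ _ su su' ini' _ pD' pm'.
  split.
    move=> j; case: (unliftP ord0 j) => [j' ->|->]; last by rewrite /gmap !tnth_cons0 e0.
    by rewrite ep !lift0 /gmap !tnth_cons e0 => /Hlt.
  by rewrite ep /gmap !tnth_cons e0.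
have oB : ord0 \in B by move: pD; rewrite in_setD ep => /andP[].
have oA : ord0 \notin A by move: pD; rewrite in_setD ep => /andP[].
split; first by move=> j; rewrite ep.
by rewrite ep /gmap !tnth_cons0 oB (negbTE oA) addbT addbF.
Qed.

Definition tl q (b : bool) (S : {set cube q.+1}) : {set cube q} := [set w : cube q | [tuple of b :: w] \in S].
Definition glue q (b : bool) (S1 S2 : {set cube q}) : {set cube q.+1} :=
  [set w : cube q.+1 | if thead w == b then (behead_tuple w : cube q) \in S1 else (behead_tuple w : cube q) \in S2].

Lemma beh_cons q (x : bool) (t : cube q) : behead_tuple [tuple of x :: t] = t.
Proof. by apply: val_inj. Qed.

Lemma tl_key q r (f : {set 'I_q.+1} -> cube q.+1) (c b' : bool) : quasiball_map r f -> c <= r ->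
  b' = tnth (f set0) ord0 (+) c ->
  tl b' (f @: small_sets q.+1 r) = [set behead_tuple (f (shiftS c A)) | A in small_sets q (r - c)].
Proof.
move=> qf cr eb; apply/setP=> w; rewrite inE; apply/imsetP/imsetP.
  case=> B sB e.
  have h := qb_head qf sB; rewrite -e tnth_cons0 eb in h.
  have ec : c = (ord0 \in B) by move: h => /(congr1 (addb (tnth (f set0) ord0))); rewrite !addKb.
  exists (unshiftS B); first by rewrite ec; apply: small_unshift.
  by rewrite ec shiftSK -e beh_cons.
case=> A sA ->; exists (shiftS c A); first exact: small_shift.
apply: cube_eq; last by rewrite beh_cons.
by rewrite /thead tnth_cons0 (qb_head qf (small_shift cr sA)) shiftS0.
Qed.

Lemma split_qb q r (S : {set cube q.+1}) : is_quasiball r S -> exists b,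
  [/\ is_quasiball r (tl b S), (0 < r -> is_quasiball r.-1 (tl (~~ b) S)) & (r = 0 -> tl (~~ b) S = set0)].
Proof.
case=> f [qf ->]; exists (tnth (f set0) ord0); split.
- exists (fun A => behead_tuple (f (shiftS false A))); split.
    by have := @qb_sub q r f false qf isT; rewrite subn0.
  by rewrite (tl_key qf (c := false)) ?addbF ?subn0.
- move=> r0; exists (fun A => behead_tuple (f (shiftS true A))); split.
    by have := @qb_sub q r f true qf r0; rewrite subn1.
  by rewrite (tl_key qf (c := true)) ?addbT ?subn1.
- move=> r0; apply/setP=> w; rewrite !inE; apply/negP=> /imsetP [B sB e].
  have h := qb_head qf sB; rewrite -e tnth_cons0 in h.
  have := small_le sB; rewrite r0; case: (ord0 \in B) h => //.
  by rewrite addbF; case: (tnth _ _).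
Qed.

Lemma glue_qb q r b (S1 S2 : {set cube q}) : is_quasiball r S1 ->
  (0 < r -> is_quasiball r.-1 S2) -> (r = 0 -> S2 = set0) -> is_quasiball r (glue b S1 S2).
Proof.
case=> g1 [q1 e1] h2 h0.
have [g2 [q2 e2]] : exists g2, (0 < r -> quasiball_map r.-1 g2) /\
    (S2 = if 0 < r then g2 @: small_sets q r.-1 else set0).
  case: (posnP r) => [r0|rp]; first by exists g1; rewrite r0 h0.
  by have [g2 [q2 ->]] := h2 rp; exists g2.
exists (gmap b g1 g2); split; first exact: qb_glue_map.
apply/setP=> w; rewrite inE; apply/idP/imsetP.
  case: eqP => hw.
    rewrite e1 => /imsetP [A sA eA]; exists (shiftS false A).
      by apply: small_shift; rewrite ?subn0.
    apply: cube_eq; first by rewrite /gmap /thead tnth_cons0 shiftS0 addbF.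
    by rewrite /gmap beh_cons shiftS0 unshiftK.
  rewrite e2; case: (posnP r) => [->|rp]; first by rewrite in_set0.
  case/imsetP=> A sA eA; exists (shiftS true A).
    by apply: small_shift; rewrite ?subn1.
  apply: cube_eq; last by rewrite /gmap beh_cons shiftS0 unshiftK.
  rewrite /gmap /thead tnth_cons0 shiftS0 addbT; move: hw; rewrite /thead.
  by case: (tnth w ord0); case: b.
case=> B sB ->; rewrite /gmap /thead tnth_cons0 beh_cons.
have sU := small_unshift sB; have le := small_le sB.
case: (ord0 \in B) sU le => /= sU le.
  rewrite (_ : (b (+) true == b) = false); last by case: b.
  by rewrite e2 le; apply: imset_f; rewrite -subn1.
by rewrite addbF eqxx e1; apply: imset_f; rewrite -(subn0 r).
Qed.

Section NatLemmas.
Variables (k : nat) (X A : nat -> nat).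
Hypothesis hA : forall j, A j <= X j.

Definition Xv j n := j < k.+1 /\ n < X j.
Definition Yv j n := j < k.+1 /\ n < A j + (if j is j1.+1 then X j1 - A j1 else 0).
Definition Nv j n := j < k.+1 /\ n < X j - A j + (if j is j1.+1 then A j1 else 0).

Definition sT j n := if n < A j then (j, n) else (j.+1, A j.+1 + (n - A j)).
Definition sF j n := if n < A j then (j.+1, X j.+1 - A j.+1 + n) else (j, n - A j).
Definition tTi j n := if n < A j then (j, n) else (j.-1, A j.-1 + (n - A j)).
Definition tFi j n := if n < X j - A j then (j, A j + n) else (j.-1, n - (X j - A j)).

Ltac crush := rewrite /Xv /Yv /Nv /sT /sF /tTi /tFi.
Ltac fin := intros; repeat match goal with |- _ /\ _ => split end; try (congr pair); first [lia | match goal with |- ?G => idtac "FAIL" G; fail end].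

Lemma sT_onto j' n' : Yv j' n' -> exists j n, Xv j n /\ sT j n = (j', n').
Proof.
crush; case: j' => [|j'] /= [h1 h2].
  have h := hA 0; exists 0, n'; rewrite ifT; fin.
case: (ltnP n' (A j'.+1)) => h3.
  exists j'.+1, n'; rewrite ifT //; have := hA j'.+1; fin.
exists j', (A j' + (n' - A j'.+1)); have := hA j'; have := hA j'.+1; move=> *.
rewrite ifF; fin.
Qed.

Lemma sF_onto j' n' : Nv j' n' -> exists j n, Xv j n /\ sF j n = (j', n').
Proof.
crush; case: j' => [|j'] /= [h1 h2].
  have h := hA 0; exists 0, (A 0 + n'); rewrite ifF; fin.
case: (ltnP n' (X j'.+1 - A j'.+1)) => h3.
  exists j'.+1, (A j'.+1 + n'); rewrite ifF; have := hA j'.+1; fin.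
exists j', (n' - (X j'.+1 - A j'.+1)); have := hA j'; have := hA j'.+1; move=> *.
rewrite ifT; fin.
Qed.

Lemma sT_inj j1 n1 j2 n2 : Xv j1 n1 -> Xv j2 n2 -> sT j1 n1 = sT j2 n2 -> j1 = j2 /\ n1 = n2.
Proof.
crush => [[a1 b1] [a2 b2]].
case: (ltnP n1 (A j1)) => c1; case: (ltnP n2 (A j2)) => c2; move=> E; have e1 := congr1 fst E; have e2 := congr1 snd E; simpl in e1, e2; clear E; try move/succn_inj: e1 => e1; subst; try lia.
Qed.

Lemma sF_inj j1 n1 j2 n2 : Xv j1 n1 -> Xv j2 n2 -> sF j1 n1 = sF j2 n2 -> j1 = j2 /\ n1 = n2.
Proof.
crush => [[a1 b1] [a2 b2]]; have h1 := hA j1; have h2 := hA j2.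
case: (ltnP n1 (A j1)) => c1; case: (ltnP n2 (A j2)) => c2; move=> E; have e1 := congr1 fst E; have e2 := congr1 snd E; simpl in e1, e2; clear E; try move/succn_inj: e1 => e1; subst; first [lia | match goal with |- ?G => idtac "FAIL" G end].
Qed.

Lemma tTi_inj j1 n1 j2 n2 : Yv j1 n1 -> Yv j2 n2 -> tTi j1 n1 = tTi j2 n2 -> j1 = j2 /\ n1 = n2.
Proof.
crush; case: j1 => [|j1] /= [a1 b1]; case: j2 => [|j2] /= [a2 b2];
case: (ltnP n1 _) => c1; case: (ltnP n2 _) => c2; move=> E; have e1 := congr1 fst E; have e2 := congr1 snd E; simpl in e1, e2; clear E; try move/succn_inj: e1 => e1; subst; first [lia | match goal with |- ?G => idtac "FAIL" G end].
Qed.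

Lemma tFi_inj j1 n1 j2 n2 : Nv j1 n1 -> Nv j2 n2 -> tFi j1 n1 = tFi j2 n2 -> j1 = j2 /\ n1 = n2.
Proof.
crush; case: j1 => [|j1] /= [a1 b1]; case: j2 => [|j2] /= [a2 b2];
case: (ltnP n1 _) => c1; case: (ltnP n2 _) => c2; move=> E; have e1 := congr1 fst E; have e2 := congr1 snd E; simpl in e1, e2; clear E; try move/succn_inj: e1 => e1; subst; try lia.
Qed.

Lemma tTi_onto j n : Xv j n -> (n < A j \/ j < k) -> exists j' n', Yv j' n' /\ tTi j' n' = (j, n).
Proof.
crush => -[a b] h; have hj := hA j; have hj1 := hA j.+1.
case: (ltnP n (A j)) => c.
  exists j, n; rewrite ifT //; case: j a b h c hj hj1 => [|j] /=; fin.
exists j.+1, (A j.+1 + (n - A j)); rewrite ifF /=; fin.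
Qed.

Lemma tFi_onto j n : Xv j n -> (A j <= n \/ j < k) -> exists j' n', Nv j' n' /\ tFi j' n' = (j, n).
Proof.
crush => -[a b] h; have hj := hA j; have hj1 := hA j.+1.
case: (ltnP n (A j)) => c.
  exists j.+1, (X j.+1 - A j.+1 + n); rewrite ifF /=; fin.
exists j, (n - A j); rewrite ifT //; case: j a b h c hj hj1 => [|j] /=; fin.
Qed.

Lemma tTi_valid j' n' : Yv j' n' -> Xv (tTi j' n').1 (tTi j' n').2 /\
  (if (tTi j' n').2 < A (tTi j' n').1 then (tTi j' n').1 = j' else (tTi j' n').1.+1 = j').
Proof.
crush; case: j' => [|j'] /= [a b]; have h0 := hA 0.
  rewrite ifT /=; last lia. rewrite ifT; fin.
have h1 := hA j'; have h2 := hA j'.+1.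
case: (ltnP n' (A j'.+1)) => c /=; first by rewrite c; fin.
rewrite ifF; fin.
Qed.

Lemma tFi_valid j' n' : Nv j' n' -> Xv (tFi j' n').1 (tFi j' n').2 /\
  (if (tFi j' n').2 < A (tFi j' n').1 then (tFi j' n').1.+1 = j' else (tFi j' n').1 = j').
Proof.
crush; case: j' => [|j'] /= [a b]; have h0 := hA 0.
  rewrite ifT /=; last lia. rewrite ifF; fin.
have h1 := hA j'; have h2 := hA j'.+1.
case: (ltnP n' (X j'.+1 - A j'.+1)) => c /=.
  rewrite ifF; fin.
rewrite ifT; fin.
Qed.

Lemma G1 j n : Xv j n -> n < A j -> Yv j n.
Proof. crush; case: j => [|j] /=; fin. Qed.
Lemma G2 j n : Xv j n -> n < A j -> j < k -> Nv j.+1 (X j.+1 - A j.+1 + n).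
Proof. crush => /=; fin. Qed.
Lemma G3 j n : Xv j n -> A j <= n -> Nv j (n - A j).
Proof. crush; have := hA j; case: j => [|j] /=; fin. Qed.
Lemma G4 j n : Xv j n -> A j <= n -> j < k -> Yv j.+1 (A j.+1 + (n - A j)).
Proof. crush => /=; have := hA j; fin. Qed.

End NatLemmas.

Lemma disjP (T : finType) (A B : {set T}) :
  (forall w, w \in A -> w \in B -> False) -> [disjoint A & B].
Proof.
move=> h; rewrite disjoint_subset; apply/subsetP => w h1; rewrite inE; apply/negP => h2.
exact: h w h1 h2.
Qed.

Section Game.
Variable k : nat.

Definition ST (s : state k) (j : nat) : nat := oapp s 0 (insub j : option 'I_k.+1).
Lemma ST_val s (i : 'I_k.+1) : ST s i = s i.
Proof. by rewrite /ST valK. Qed.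
Lemma ST_inord s j : j < k.+1 -> ST s j = s (inord j).
Proof. by move=> h; rewrite -(ST_val s (inord j)) inordK. Qed.
Lemma ST_out s j : ~~ (j < k.+1) -> ST s j = 0.
Proof. by move=> h; rewrite /ST insubN. Qed.
Lemma ST_legal x a : legal x a -> forall j, ST a j <= ST x j.
Proof. by move=> hl j; rewrite /ST; case: insubP => [i _ _|] //=. Qed.

Lemma ST_yes x a j : j < k.+1 ->
  ST (yes_state x a) j = ST a j + (if j is j1.+1 then ST x j1 - ST a j1 else 0).
Proof.
move=> h; rewrite !ST_inord // ffunE inordK //; case: j h => [|j] h //=.
by rewrite !ST_inord // ltnW.
Qed.
Lemma ST_no x a j : j < k.+1 ->
  ST (no_state x a) j = ST x j - ST a j + (if j is j1.+1 then ST a j1 else 0).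
Proof.
move=> h; rewrite !ST_inord // ffunE inordK //; case: j h => [|j] h //=.
by rewrite !ST_inord // ltnW.
Qed.

Section BNN.
Variables (T : finType) (s : state k) (B : forall i : 'I_k.+1, 'I_(s i) -> {set T}).

Definition BNN (j n : nat) : {set T} :=
  match (insub j : option 'I_k.+1) with
  | Some i => match (insub n : option 'I_(s i)) with Some u => @B i u | None => set0 end
  | None => set0 end.

Lemma BNN_val i (u : 'I_(s i)) : BNN i u = @B i u.
Proof. by rewrite /BNN valK valK. Qed.

Lemma BNN_mem w j n : w \in BNN j n -> exists i (u : 'I_(s i)), [/\ val i = j, val u = n & w \in @B i u].
Proof.
rewrite /BNN; case: insubP => [i _ <-|]; last by rewrite in_set0.
case: insubP => [u _ <-|]; last by rewrite in_set0.
by move=> h; exists i, u.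
Qed.

Lemma BNN_out j n : ~~ (j < k.+1) -> BNN j n = set0.
Proof. by move=> h; rewrite /BNN insubN. Qed.

Lemma ex_ord j n : j < k.+1 -> n < ST s j -> exists i (u : 'I_(s i)), val i = j /\ val u = n.
Proof.
move=> hj; rewrite ST_inord // => hn.
exists (inord j), (Ordinal hn); split => //; exact: inordK.
Qed.

Lemma pack_same (pk : forall (i j : 'I_k.+1) (u : 'I_(s i)) (v : 'I_(s j)),
    (i != j) || (nat_of_ord u != nat_of_ord v) -> [disjoint @B i u & @B j v])
  i1 i2 (u1 : 'I_(s i1)) (u2 : 'I_(s i2)) w :
  w \in @B i1 u1 -> w \in @B i2 u2 -> val i1 = val i2 /\ val u1 = val u2.
Proof.
move=> h1 h2; case: (boolP ((i1 != i2) || (nat_of_ord u1 != nat_of_ord u2))).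
  by move/pk/disjointFr/(_ h1); rewrite h2.
by rewrite negb_or !negbK => /andP[/eqP e /eqP e2]; split; [rewrite e | exact: e2].
Qed.

Lemma BNN_same (pk : forall (i j : 'I_k.+1) (u : 'I_(s i)) (v : 'I_(s j)),
    (i != j) || (nat_of_ord u != nat_of_ord v) -> [disjoint @B i u & @B j v]) w j1 n1 j2 n2 : w \in BNN j1 n1 -> w \in BNN j2 n2 -> j1 = j2 /\ n1 = n2.
Proof.
case/BNN_mem=> [i1 [u1 [<- <- h1]]]; case/BNN_mem=> [i2 [u2 [<- <- h2]]].
exact: (pack_same pk h1 h2).
Qed.

End BNN.

Lemma BNN_ball q (s : state k) (B : forall i : 'I_k.+1, 'I_(s i) -> {set cube q}) (bf : ball_family B) j n :
  j < k.+1 -> n < ST s j -> is_quasiball (k - j) (BNN B j n).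
Proof.
move=> hj hn; have [i [u [<- <-]]] := ex_ord hj hn; rewrite BNN_val; exact: bf.
Qed.


Lemma ne_contra (i1 i2 : 'I_k.+1) (m1 m2 : nat) : (i1 != i2) || (m1 != m2) ->
  nat_of_ord i1 = nat_of_ord i2 -> m1 = m2 -> False.
Proof. by move=> h /ord_inj e e2; move: h; rewrite e e2 !eqxx. Qed.

Section Glue.
Variables (q : nat) (x a : state k).
Hypothesis hl : legal x a.
Variables (BY : forall i : 'I_k.+1, 'I_(yes_state x a i) -> {set cube q})
          (BNo : forall i : 'I_k.+1, 'I_(no_state x a i) -> {set cube q}).
Local Notation X := (ST x).
Local Notation A := (ST a).
Let hA : forall j, A j <= X j := ST_legal hl.

Lemma YvE j n : Yv k X A j n <-> j < k.+1 /\ n < ST (yes_state x a) j.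
Proof. by rewrite /Yv; split => -[h1 h2]; split => //; rewrite ?ST_yes // in h2 *. Qed.
Lemma NvE j n : Nv k X A j n <-> j < k.+1 /\ n < ST (no_state x a) j.
Proof. by rewrite /Nv; split => -[h1 h2]; split => //; rewrite ?ST_no // in h2 *. Qed.

Definition Fg (j n : nat) : {set cube q.+1} :=
  if n < A j then glue true (BNN BY (sT A j n).1 (sT A j n).2) (BNN BNo (sF X A j n).1 (sF X A j n).2)
  else glue false (BNN BNo (sF X A j n).1 (sF X A j n).2) (BNN BY (sT A j n).1 (sT A j n).2).

Lemma Fg_mem w j n : (w \in Fg j n) =
  (if thead w then (behead_tuple w : cube q) \in BNN BY (sT A j n).1 (sT A j n).2
   else (behead_tuple w : cube q) \in BNN BNo (sF X A j n).1 (sF X A j n).2).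
Proof. by rewrite /Fg; case: ifP => _; rewrite inE; case: (thead w). Qed.

Lemma glue_ball : ball_family BY -> ball_family BNo ->
  ball_family (fun (i : 'I_k.+1) (u : 'I_(x i)) => Fg i u).
Proof.
move=> bY bN i u /=.
have xv : Xv k X i u by split; rewrite ?ST_val.
rewrite /Fg /sT /sF; case: ltnP => c /=.
  apply: glue_qb.
  - by have [h1 h2] := (YvE i u).1 (G1 (A:=A) xv c); apply: (BNN_ball (B:=BY)) h1 h2; exact bY.
  - move=> kp; have jk : i < k by lia.
    have [h1 h2] := (NvE _ _).1 (G2 (A:=A) xv c jk); rewrite -subnS; apply: (BNN_ball (B:=BNo)) h1 h2; exact bN.
  - by move=> k0; apply: BNN_out; lia.
apply: glue_qb.
- by have [h1 h2] := (NvE _ _).1 (G3 hA xv c); apply: (BNN_ball (B:=BNo)) h1 h2; exact bN.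
- move=> kp; have jk : i < k by lia.
  have [h1 h2] := (YvE _ _).1 (G4 hA xv c jk); rewrite -subnS; apply: (BNN_ball (B:=BY)) h1 h2; exact bY.
- by move=> k0; apply: BNN_out; lia.
Qed.

Lemma glue_cov : (forall w : cube q, exists (i : 'I_k.+1) (u : 'I_(yes_state x a i)), w \in @BY i u) ->
  (forall w : cube q, exists (i : 'I_k.+1) (u : 'I_(no_state x a i)), w \in @BNo i u) ->
  forall w : cube q.+1, exists (i : 'I_k.+1) (u : 'I_(x i)), w \in Fg i u.
Proof.
move=> cY cN w; case hb: (thead w).
  have [i' [u' h]] := cY (behead_tuple w).
  have yv : Yv k X A i' u' by apply/YvE; rewrite ST_val.
  have [j [n [xv e]]] := sT_onto hA yv.
  have [i [u [ei eu]]] := ex_ord xv.1 xv.2.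
  by exists i, u; rewrite Fg_mem hb ei eu e /= BNN_val.
have [i' [u' h]] := cN (behead_tuple w).
have nv : Nv k X A i' u' by apply/NvE; rewrite ST_val.
have [j [n [xv e]]] := sF_onto hA nv.
have [i [u [ei eu]]] := ex_ord xv.1 xv.2.
by exists i, u; rewrite Fg_mem hb ei eu e /= BNN_val.
Qed.

Lemma glue_pack :
  (forall (i j : 'I_k.+1) (u : 'I_(yes_state x a i)) (v : 'I_(yes_state x a j)),
    (i != j) || (nat_of_ord u != nat_of_ord v) -> [disjoint @BY i u & @BY j v]) ->
  (forall (i j : 'I_k.+1) (u : 'I_(no_state x a i)) (v : 'I_(no_state x a j)),
    (i != j) || (nat_of_ord u != nat_of_ord v) -> [disjoint @BNo i u & @BNo j v]) ->
  forall (i j : 'I_k.+1) (u : 'I_(x i)) (v : 'I_(x j)),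
    (i != j) || (nat_of_ord u != nat_of_ord v) -> [disjoint Fg i u & Fg j v].
Proof.
move=> pY pN i1 i2 u1 u2 hne; apply: disjP => w.
have xv1 : Xv k X i1 u1 by split; rewrite ?ST_val.
have xv2 : Xv k X i2 u2 by split; rewrite ?ST_val.
rewrite !Fg_mem; case: (thead w) => h1 h2.
  have [e1 e2] := BNN_same pY h1 h2.
  have [ei eu] := sT_inj xv1 xv2 (injective_projections _ _ e1 e2).
  exact: ne_contra hne ei eu.
have [e1 e2] := BNN_same pN h1 h2.
have [ei eu] := sF_inj hA xv1 xv2 (injective_projections _ _ e1 e2).
exact: ne_contra hne ei eu.
Qed.

End Glue.

Section Split.
Variables (q : nat) (x a : state k).
Hypothesis hl : legal x a.
Variable B : forall i : 'I_k.+1, 'I_(x i) -> {set cube q.+1}.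
Hypothesis H1 : forall (i : 'I_k.+1) (u : 'I_(x i)), is_quasiball (k - i) (tl (u < a i) (@B i u)).
Hypothesis H2 : forall (i : 'I_k.+1) (u : 'I_(x i)), 0 < k - i ->
  is_quasiball (k - i).-1 (tl (~~ (u < a i)) (@B i u)).
Hypothesis H3 : forall (i : 'I_k.+1) (u : 'I_(x i)), k - i = 0 -> tl (~~ (u < a i)) (@B i u) = set0.
Local Notation X := (ST x).
Local Notation A := (ST a).
Let hA : forall j, A j <= X j := ST_legal hl.

Let YvE' j n : Yv k X A j n <-> j < k.+1 /\ n < ST (yes_state x a) j.
Proof. by rewrite /Yv; split => -[h1 h2]; split => //; rewrite ?ST_yes // in h2 *. Qed.
Let NvE' j n : Nv k X A j n <-> j < k.+1 /\ n < ST (no_state x a) j.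
Proof. by rewrite /Nv; split => -[h1 h2]; split => //; rewrite ?ST_no // in h2 *. Qed.

Lemma P123 j n : Xv k X j n ->
  [/\ is_quasiball (k - j) (tl (n < A j) (BNN B j n)),
      0 < k - j -> is_quasiball (k - j).-1 (tl (~~ (n < A j)) (BNN B j n)) &
      k - j = 0 -> tl (~~ (n < A j)) (BNN B j n) = set0].
Proof.
case=> hj hn; have [i [u [<- <-]]] := ex_ord hj hn.
rewrite BNN_val ST_val; split; [exact: H1 | exact: H2 | exact: H3].
Qed.

Definition FY (i : 'I_k.+1) (u : 'I_(yes_state x a i)) : {set cube q} :=
  tl true (BNN B (tTi A i u).1 (tTi A i u).2).
Definition FN (i : 'I_k.+1) (u : 'I_(no_state x a i)) : {set cube q} :=
  tl false (BNN B (tFi X A i u).1 (tFi X A i u).2).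

Lemma split_ball_Y : ball_family FY.
Proof.
move=> i u; have yv : Yv k X A i u by apply/YvE'; rewrite ST_val.
have [xv hc] := tTi_valid hA yv; rewrite /FY; move: xv hc.
case: (tTi A i u) => j n /= xv hc.
have [p1 p2 p3] := P123 xv.
case c: (n < A j) in hc p1 p2.
  by rewrite -hc.
have jk : 0 < k - j by have := ltn_ord i; lia.
by have := p2 jk; rewrite -hc subnS.
Qed.

Lemma split_ball_N : ball_family FN.
Proof.
move=> i u; have nv : Nv k X A i u by apply/NvE'; rewrite ST_val.
have [xv hc] := tFi_valid hA nv; rewrite /FN; move: xv hc.
case: (tFi X A i u) => j n /= xv hc.
have [p1 p2 p3] := P123 xv.
case c: (n < A j) in hc p1 p2.
  have jk : 0 < k - j by have := ltn_ord i; lia.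
  by have := p2 jk; rewrite -hc subnS.
by rewrite -hc.
Qed.

Lemma split_cov_Y : (forall w : cube q.+1, exists (i : 'I_k.+1) (u : 'I_(x i)), w \in @B i u) ->
  forall w : cube q, exists (i : 'I_k.+1) (u : 'I_(yes_state x a i)), w \in FY u.
Proof.
move=> cB w; have [i0 [u0 h]] := cB [tuple of true :: w].
have xv : Xv k X i0 u0 by split; rewrite ?ST_val.
have [p1 p2 p3] := P123 xv.
have hor : u0 < A i0 \/ i0 < k.
  case: (ltnP u0 (A i0)) => c; [by left | right].
  have hw : w \in tl (~~ (u0 < A i0)) (BNN B i0 u0) by rewrite -leqNgt c inE BNN_val.
  case: (posnP (k - i0)) => k0; last lia.
  by rewrite p3 ?in_set0 in hw.
have [j' [n' [yv e]]] := tTi_onto hA xv hor.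
have [yj yn] := (YvE' _ _).1 yv.
have [i [u [ei eu]]] := ex_ord yj yn.
by exists i, u; rewrite /FY ei eu e /= inE BNN_val.
Qed.

Lemma split_cov_N : (forall w : cube q.+1, exists (i : 'I_k.+1) (u : 'I_(x i)), w \in @B i u) ->
  forall w : cube q, exists (i : 'I_k.+1) (u : 'I_(no_state x a i)), w \in FN u.
Proof.
move=> cB w; have [i0 [u0 h]] := cB [tuple of false :: w].
have xv : Xv k X i0 u0 by split; rewrite ?ST_val.
have [p1 p2 p3] := P123 xv.
have hor : A i0 <= u0 \/ i0 < k.
  case: (ltnP u0 (A i0)) => c; [right | by left].
  have hw : w \in tl (~~ (u0 < A i0)) (BNN B i0 u0) by rewrite c inE BNN_val.
  case: (posnP (k - i0)) => k0; last lia.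
  by rewrite p3 ?in_set0 in hw.
have [j' [n' [nv e]]] := tFi_onto hA xv hor.
have [nj nn] := (NvE' _ _).1 nv.
have [i [u [ei eu]]] := ex_ord nj nn.
by exists i, u; rewrite /FN ei eu e /= inE BNN_val.
Qed.

Lemma split_pack_Y :
  (forall (i j : 'I_k.+1) (u : 'I_(x i)) (v : 'I_(x j)),
    (i != j) || (nat_of_ord u != nat_of_ord v) -> [disjoint @B i u & @B j v]) ->
  forall (i j : 'I_k.+1) (u : 'I_(yes_state x a i)) (v : 'I_(yes_state x a j)),
    (i != j) || (nat_of_ord u != nat_of_ord v) -> [disjoint FY u & FY v].
Proof.
move=> pk i1 i2 u1 u2 hne; apply: disjP => w; rewrite /FY !inE => h1 h2.
have [e1 e2] := BNN_same pk h1 h2.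
have yv1 : Yv k X A i1 u1 by apply/YvE'; rewrite ST_val.
have yv2 : Yv k X A i2 u2 by apply/YvE'; rewrite ST_val.
have [ei eu] := tTi_inj yv1 yv2 (injective_projections _ _ e1 e2).
exact: ne_contra hne ei eu.
Qed.

Lemma split_pack_N :
  (forall (i j : 'I_k.+1) (u : 'I_(x i)) (v : 'I_(x j)),
    (i != j) || (nat_of_ord u != nat_of_ord v) -> [disjoint @B i u & @B j v]) ->
  forall (i j : 'I_k.+1) (u : 'I_(no_state x a i)) (v : 'I_(no_state x a j)),
    (i != j) || (nat_of_ord u != nat_of_ord v) -> [disjoint FN u & FN v].
Proof.
move=> pk i1 i2 u1 u2 hne; apply: disjP => w; rewrite /FN !inE => h1 h2.
have [e1 e2] := BNN_same pk h1 h2.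
have nv1 : Nv k X A i1 u1 by apply/NvE'; rewrite ST_val.
have nv2 : Nv k X A i2 u2 by apply/NvE'; rewrite ST_val.
have [ei eu] := tFi_inj nv1 nv2 (injective_projections _ _ e1 e2).
exact: ne_contra hne ei eu.
Qed.

End Split.
End Game.

Definition cov q k (x : state k) :=
  exists B : forall i : 'I_k.+1, 'I_(x i) -> {set cube q}, is_covering B.
Definition pak q k (x : state k) :=
  exists B : forall i : 'I_k.+1, 'I_(x i) -> {set cube q}, is_packing B.

Lemma sort_ord n (P : pred 'I_n) : exists s : 'I_n -> 'I_n, injective s /\ forall u, P (s u) = (u < #|P|).
Proof.
case: n P => [|n] P; first by exists id; split => // -[].
set L := enum P ++ enum (predC P).
have uL : uniq L.
  rewrite cat_uniq !enum_uniq /= andbT; apply/hasPn => v; rewrite !mem_enum !inE /=.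
  done.
have sL : size L = n.+1 by rewrite size_cat -!cardE cardC card_ord.
exists (fun u => nth ord0 L u); split.
  by move=> u v /eqP; rewrite nth_uniq ?sL // => /eqP; apply: ord_inj.
move=> u; rewrite /L nth_cat -cardE; case: ifP => h.
  have h1 : u < size (enum P) by rewrite -cardE.
  by have := mem_nth ord0 h1; rewrite mem_enum.
have h2 : u - #|P| < size (enum (predC P)).
  have e : size (enum P) + size (enum (predC P)) = n.+1 by rewrite -size_cat.
  have := ltn_ord u; move/negbT: h; rewrite -leqNgt cardE; set a1 := size (enum P) in e *; set b1 := size (enum (predC P)) in e *; lia.
by have := mem_nth ord0 h2; rewrite mem_enum inE => /negbTE.
Qed.

Lemma normalize q k (x : state k) (B : forall i : 'I_k.+1, 'I_(x i) -> {set cube q.+1}) :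
  ball_family B ->
  exists (a : state k) (B' : forall i : 'I_k.+1, 'I_(x i) -> {set cube q.+1}),
  [/\ legal x a, ball_family B',
      (forall w, exists (i : 'I_k.+1) (u : 'I_(x i)), w \in B i u) ->
        (forall w, exists (i : 'I_k.+1) (u : 'I_(x i)), w \in B' i u),
      (forall (i j : 'I_k.+1) (u : 'I_(x i)) (v : 'I_(x j)),
        (i != j) || (nat_of_ord u != nat_of_ord v) -> [disjoint B i u & B j v]) ->
      (forall (i j : 'I_k.+1) (u : 'I_(x i)) (v : 'I_(x j)),
        (i != j) || (nat_of_ord u != nat_of_ord v) -> [disjoint B' i u & B' j v]) &
  [/\ forall (i : 'I_k.+1) (u : 'I_(x i)), is_quasiball (k - i) (tl (u < a i) (B' i u)),
      forall (i : 'I_k.+1) (u : 'I_(x i)), 0 < k - i ->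
         is_quasiball (k - i).-1 (tl (~~ (u < a i)) (B' i u)) &
      forall (i : 'I_k.+1) (u : 'I_(x i)), k - i = 0 -> tl (~~ (u < a i)) (B' i u) = set0]].
Proof.
move=> bB.
have [c hc] : exists c : forall i : 'I_k.+1, 'I_(x i) -> bool, forall (i : 'I_k.+1) (u : 'I_(x i)),
   [/\ is_quasiball (k - i) (tl (c i u) (B i u)),
       0 < k - i -> is_quasiball (k - i).-1 (tl (~~ c i u) (B i u)) &
       k - i = 0 -> tl (~~ c i u) (B i u) = set0].
  apply: (fin_all_exists (U := fun i : 'I_k.+1 => 'I_(x i) -> bool)
     (P := fun (i : 'I_k.+1) (f : 'I_(x i) -> bool) => forall u : 'I_(x i), [/\ is_quasiball (k - i) (tl (f u) (B i u)),
       0 < k - i -> is_quasiball (k - i).-1 (tl (~~ f u) (B i u)) &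
       k - i = 0 -> tl (~~ f u) (B i u) = set0])) => i.
  have := @fin_all_exists _ (fun _ : 'I_(x i) => bool) (fun u b => [/\ is_quasiball (k - i) (tl b (B i u)),
       0 < k - i -> is_quasiball (k - i).-1 (tl (~~ b) (B i u)) &
       k - i = 0 -> tl (~~ b) (B i u) = set0]) (fun u => split_qb (bB i u)).
  by case=> f hf; exists f.
have [s hs] : exists s : forall i : 'I_k.+1, 'I_(x i) -> 'I_(x i), forall i,
    injective (s i) /\ forall u, c i (s i u) = (u < #|[pred v : 'I_(x i) | c i v]|).
  have := @fin_all_exists _ (fun i : 'I_k.+1 => 'I_(x i) -> 'I_(x i))
    (fun i s => injective s /\ forall u, c i (s u) = (u < #|[pred v : 'I_(x i) | c i v]|))
    (fun i => sort_ord [pred v : 'I_(x i) | c i v]).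
  by case=> f hf; exists f.
exists [ffun i => #|[pred v : 'I_(x i) | c i v]|], (fun i u => B i (s i u)).
have ea (i : 'I_k.+1) (u : 'I_(x i)) : (u < [ffun i => #|[pred v : 'I_(x i) | c i v]|] i) = c i (s i u).
  by rewrite ffunE (hs i).2.
split.
- by move=> i; rewrite ffunE; apply: leq_trans (max_card _) _; rewrite card_ord.
- by move=> i u; apply: bB.
- move=> cB w; have [i [u h]] := cB w.
  have /codomP [v ev] := injF_onto (hs i).1 u.
  by exists i, v; rewrite -ev.
- move=> pk i1 i2 u1 u2 hne; apply: pk.
  case: (eqVneq i1 i2) => [e|ne] //.
  subst i2; rewrite ?eqxx /= in hne *; apply: contra hne => /eqP e.
  by apply/eqP; congr val; apply: (hs i1).1; apply: val_inj.
by split=> i u; rewrite ea; case: (hc i (s i u)).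
Qed.

Lemma step_cov q k (x : state k) :
  cov q.+1 x <-> exists a, legal x a /\ cov q (yes_state x a) /\ cov q (no_state x a).
Proof.
split.
  case=> B [bB cB].
  have [a [B' [hl bB' cB' _ [H1 H2 H3]]]] := normalize bB.
  exists a; split=> //; split.
    exists (FY (a:=a) B'); split; first exact: split_ball_Y.
    exact: split_cov_Y (cB' cB).
  exists (FN (a:=a) B'); split; first exact: split_ball_N.
  exact: split_cov_N (cB' cB).
case=> a [hl [[BY [bY cY]] [BNo [bN cN]]]].
exists (fun (i : 'I_k.+1) (u : 'I_(x i)) => Fg BY BNo i u); split.
  exact: glue_ball.
exact: glue_cov.
Qed.

Lemma step_pak q k (x : state k) :
  pak q.+1 x <-> exists a, legal x a /\ pak q (yes_state x a) /\ pak q (no_state x a).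
Proof.
split.
  case=> B [bB pB].
  have [a [B' [hl bB' _ pB' [H1 H2 H3]]]] := normalize bB.
  exists a; split=> //; split.
    exists (FY (a:=a) B'); split; first exact: split_ball_Y.
    by move=> i j u v; exact: (@split_pack_Y _ _ _ a _ (pB' pB) i j u v).
  exists (FN (a:=a) B'); split; first exact: split_ball_N.
  by move=> i j u v; exact: (@split_pack_N _ _ _ a _ (pB' pB) i j u v).
case=> a [hl [[BY [bY pY]] [BNo [bN pN]]]].
exists (fun (i : 'I_k.+1) (u : 'I_(x i)) => Fg BY BNo i u); split.
  exact: glue_ball.
by move=> i j u v; apply: glue_pack.
Qed.

Lemma qb0 r (S : {set cube 0}) : is_quasiball r S -> S = setT.
Proof.
case=> f [_ ->]; apply/setP => w; rewrite inE; apply/imsetP; exists set0.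
  by rewrite inE cards0.
by rewrite [w]tuple0 [f set0]tuple0.
Qed.

Lemma qb0T r : is_quasiball r (setT : {set cube 0}).
Proof.
exists (fun _ => [tuple]); split.
  split; first by move=> A B _ _ _; apply/setP => -[].
  by move=> A B _ _ _ [].
apply/setP => w; rewrite inE; apply/esym/imsetP; exists set0.
  by rewrite inE cards0.
by rewrite [w]tuple0.
Qed.

Lemma w_ge k (x : state k) i : x i <= weight x.
Proof. by rewrite /weight (bigD1 i) //= leq_addr. Qed.

Lemma w_ge2 k (x : state k) i j : i != j -> x i + x j <= weight x.
Proof.
move=> ne; rewrite /weight (bigD1 i) //= (bigD1 j) /=; last by rewrite eq_sym.
by rewrite addnA leq_addr.
Qed.

Lemma base_cov k (x : state k) : cov 0 x <-> 1 <= weight x.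
Proof.
split.
  case=> B [_ cB]; have [i [u _]] := cB [tuple].
  by apply: leq_trans (w_ge x i); apply: leq_ltn_trans (ltn_ord u).
move=> hw.
have [i hi] : exists i, 0 < x i.
  apply/existsP; apply: contraLR hw; rewrite negb_exists => /forallP h.
  rewrite -ltnNge ltnS leqn0 /weight; apply/eqP/big1 => i _.
  by have := h i; rewrite lt0n negbK => /eqP.
exists (fun i (u : 'I_(x i)) => setT); split; first by move=> ? ?; apply: qb0T.
by move=> w; exists i, (Ordinal hi); rewrite inE.
Qed.

Lemma base_pak k (x : state k) : pak 0 x <-> weight x <= 1.
Proof.
split.
  case=> B [bB pB].
  have no i j (u : 'I_(x i)) (v : 'I_(x j)) : (i != j) || (nat_of_ord u != nat_of_ord v) -> False.
    move/pB => d; have := disjointFr d (x:=[tuple]).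
    by rewrite (qb0 (bB i u)) (qb0 (bB j v)) !inE => /(_ isT).
  case: (boolP [exists i, 0 < x i]); last first.
    rewrite negb_exists => /forallP h; rewrite /weight big1 // => i _.
    by have := h i; rewrite lt0n negbK => /eqP.
  case/existsP => i hi.
  have x1 : x i <= 1.
    rewrite leqNgt; apply/negP => h2.
    by apply: (no i i (Ordinal hi) (Ordinal h2)); rewrite /= orbT.
  rewrite /weight (bigD1 i) //= big1 ?addn0 // => j ji.
  apply/eqP; rewrite -leqn0 leqNgt; apply/negP => hj.
  by apply: (no i j (Ordinal hi) (Ordinal hj)); rewrite eq_sym ji.
move=> hw; exists (fun i (u : 'I_(x i)) => setT); split; first by move=> ? ?; apply: qb0T.
move=> i j u v; case: (eqVneq i j) => [e|ne] /= h.
  subst j; have := w_ge x i; have := ltn_ord u; have := ltn_ord v; move: h => /=; lia.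
have := w_ge2 x ne; have := ltn_ord u; have := ltn_ord v; lia.
Qed.

Lemma main_cov q : forall k (x : state k), path_win q x <-> cov q x.
Proof.
elim: q => [|q IH] k x /=; first by rewrite base_cov.
rewrite step_cov; split => -[a [hl [h1 h2]]]; exists a; split=> //; split; by apply/IH.
Qed.

Lemma main_pak q : forall k (x : state k), orig_win q x <-> pak q x.
Proof.
elim: q => [|q IH] k x /=; first by rewrite base_pak.
rewrite step_pak; split => -[a [hl [h1 h2]]]; exists a; split=> //; split; by apply/IH.
Qed.

Unset Implicit Arguments.

Theorem theorem19 (q k : nat) (x : state k) :
  (path_win q x <->
     exists B : forall i : 'I_k.+1, 'I_(x i) -> {set cube q}, is_covering B) /\
  (orig_win q x <->
     exists B : forall i : 'I_k.+1, 'I_(x i) -> {set cube q}, is_packing B).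
Proof. split; [exact: main_cov | exact: main_pak]. Qed.
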